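(* Let $T\in\mathcal{B}(\mathcal{H})$ be a self-adjoint operator which is the pencil of a pair of projections at $\lambda\in\mathbb{R}$ and the pencil of a pair of projections at $\mu\in\mathbb{R}$. If one of $\lambda$ and $\mu$ is zero, then the other belongs to $\{-1,0,1\}$.
   Context: $\mathcal{H}$ is an infinite-dimensional complex Hilbert space; ''projection'' means orthogonal projection. For $\lambda\in\mathbb{R}$, $T$ is the pencil of a pair of projections at $\lambda$ if $T=\lambda P+Q$ for some nonzero projections $P,Q\in\mathcal{B}(\mathcal{H})$. *)

(* Defs.v *)
From HB Require Import structures.
From mathcomp Require Import all_boot all_order all_algebra.
From mathcomp Require Import complex.
From mathcomp Require Import reals.
Set Implicit Arguments. Unset Strict Implicit. Unset Printing Implicit Defensive.
Import Order.TTheory GRing.Theory Num.Theory.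
Local Open Scope ring_scope.

Section Hilbert.
Variables (R : realType) (V : lmodType R[i]) (ip : V -> V -> R[i]).

Definition ipnorm (x : V) : R := Num.sqrt (complex.Re (ip x x)).

Definition inner_product_axioms : Prop :=
  [/\ (forall (a : R[i]) x y z, ip (a *: x + y) z = a * ip x z + ip y z),
      (forall x y, ip y x = (ip x y)^*),
      (forall x, 0 <= ip x x) &
      (forall x, ip x x = 0 -> x = 0)].

Definition complete_ip : Prop :=
  forall u : nat -> V,
    (forall e : R, 0 < e -> exists N, forall m n, (N <= m)%N -> (N <= n)%N ->
        ipnorm (u m - u n) < e) ->
    exists l : V, forall e : R, 0 < e -> exists N, forall n, (N <= n)%N ->
        ipnorm (u n - l) < e.

Definition complex_hilbert_space : Prop :=
  inner_product_axioms /\ complete_ip.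

Definition infinite_dimensional : Prop :=
  forall n : nat, exists v : 'I_n -> V,
    forall c : 'I_n -> R[i], \sum_(i < n) c i *: v i = 0 -> forall i, c i = 0.

Definition bounded_operator (T : V -> V) : Prop :=
  [/\ (forall x y, T (x + y) = T x + T y),
      (forall (a : R[i]) x, T (a *: x) = a *: T x) &
      (exists M : R, forall x, ipnorm (T x) <= M * ipnorm x)].

Definition self_adjoint (T : V -> V) : Prop :=
  bounded_operator T /\ forall x y, ip (T x) y = ip x (T y).

Definition projection (P : V -> V) : Prop :=
  self_adjoint P /\ forall x, P (P x) = P x.

Definition nonzero_op (P : V -> V) : Prop := exists x, P x <> 0.

Definition pencil_at (T : V -> V) (lam : R) : Prop :=
  exists P Q : V -> V,
    [/\ projection P, nonzero_op P, projection Q, nonzero_op Q &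
        forall x, T x = (lam%:C)%C *: P x + Q x].

End Hilbert.

(* Main.v *)
Require Import Defs.
From HB Require Import structures.
From mathcomp Require Import all_boot all_order all_algebra.
From mathcomp Require Import complex.
From mathcomp Require Import reals.
Import Order.TTheory GRing.Theory Num.Theory.
Local Open Scope ring_scope.

Section Key.
Variables (K : fieldType) (V : lmodType K).

Lemma key (S P Q : V -> V) (a : K) (x0 : V)
  (PD : forall x y, P (x + y) = P x + P y) (PZ : forall (c : K) x, P (c *: x) = c *: P x)
  (QD : forall x y, Q (x + y) = Q x + Q y) (QZ : forall (c : K) x, Q (c *: x) = c *: Q x)
  (PP : forall x, P (P x) = P x) (QQ : forall x, Q (Q x) = Q x)
  (SS : forall x, S (S x) = S x) (hS : forall x, S x = a *: P x + Q x)
  (ha : a != 0) (hx0 : P x0 != 0) : a = 1 \/ a = -1.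
Proof.
have P0 : P 0 = 0 by have := PZ 0 0; rewrite !scale0r.
have Q0 : Q 0 = 0 by have := QZ 0 0; rewrite !scale0r.
have E : forall x, (a - 1) *: P x + P (Q x) + Q (P x) = 0.
  move=> x; have H := SS x.
  rewrite [in LHS]hS !hS PD QD !PZ !QZ PP QQ scalerDr scalerA in H.
  apply: (scalerI ha); rewrite scaler0.
  move/eqP: H; rewrite -subr_eq0 => /eqP <-.
  rewrite opprD addrACA addrK !scalerDr scalerA mulrBr mulr1 scalerBl.
  by congr (_ + _); rewrite addrAC.
set u := P x0; set v := Q u.
have E1 := E u; rewrite /u PP -/u -/v in E1.
have E2 := E x0; rewrite -/u -/v in E2.
have E3 := congr1 P E2; rewrite P0 !PD PZ /u !PP -/u in E3.
have vP : P v = v.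
  apply: (@addrI _ ((a - 1) *: u + P (Q x0))).
  by rewrite E3 E2.
rewrite vP in E1.
set w := v + v.
have F1 : w = (1 - a) *: u.
  have : (a - 1) *: u + w = 0 by rewrite /w addrA.
  move/eqP; rewrite addrC addr_eq0 => /eqP ->.
  by rewrite -scaleNr opprB.
have F2 : (a - 1) *: v + w = 0.
  rewrite /w addrA.
  by have := congr1 Q E1; rewrite Q0 !QD QZ /v QQ -/v.
have F3 : (a + 1) *: w = 0.
  have -> : a + 1 = (a - 1) + 1 + 1 by rewrite subrK.
  rewrite -/(a - 1) in F2 *; set b := a - 1 in F2 *.
  rewrite (@scalerDl _ _ w (b + 1) 1) (@scalerDl _ _ w b 1) scale1r.
  transitivity ((b *: v + w) + (b *: v + w)); last by rewrite F2 addr0.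
  by rewrite /w scalerDr [RHS]addrACA addrA.
rewrite F1 scalerA in F3.
move/eqP: F3; rewrite scaler_eq0 (negbTE hx0) orbF mulf_eq0 => /orP [].
  by rewrite addr_eq0 => /eqP ->; right.
by rewrite subr_eq0 => /eqP <-; left.
Qed.
End Key.

Lemma gen (R : realType) (V : lmodType R[i]) (ip : V -> V -> R[i])
  (T : V -> V) (l m : R) :
  pencil_at ip T l -> pencil_at ip T m -> l = 0 -> m = -1 \/ m = 0 \/ m = 1.
Proof.
move=> [P0 [Q0 [_ _ [[[Q0D Q0Z _] _] Q0Q] _ h0]]].
move=> [P [Q [[[[PD PZ _] _] PP] [x0 hx0] [[[QD QZ _] _] QQ] _ h]]] l0.
subst l.
have h0' : forall x, T x = Q0 x.
  by move=> x; rewrite h0; have -> : ((0 : R)%:C)%C = 0 :> R[i] by []; rewrite scale0r add0r.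
have TT : forall x, T (T x) = T x by move=> x; rewrite !h0' Q0Q.
have [->|mn0] := eqVneq m 0; first by right; left.
have ha : ((m%:C)%C : R[i]) != 0.
  by apply/eqP => /(congr1 (@complex.Re R)) /=; apply/eqP.
have [] := @key _ _ T P Q _ x0 PD PZ QD QZ PP QQ TT h ha (introN eqP hx0).
  by move/(congr1 (@complex.Re R)) => /= ->; right; right.
by move/(congr1 (@complex.Re R)) => /= ->; left.
Qed.

Theorem proposition3p1 (R : realType) (V : lmodType R[i]) (ip : V -> V -> R[i])
  (hH : complex_hilbert_space ip) (hinf : infinite_dimensional V)
  (T : V -> V) (hT : self_adjoint ip T) (lam mu : R)
  (hlam : pencil_at ip T lam) (hmu : pencil_at ip T mu) :
  (lam = 0 -> mu = -1 \/ mu = 0 \/ mu = 1) /\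
  (mu = 0 -> lam = -1 \/ lam = 0 \/ lam = 1).
Proof.
split; [exact: gen hlam hmu | exact: gen hmu hlam].
Qed.
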